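(* Let $n\ge2$ and $\alpha^{(1)},\dots,\alpha^{(n-2)}\in\mathbb{R}$. The assignment $$h\mapsto qp,\quad x_-\mapsto-q^2/2,\quad x_+\mapsto p^2/2,\quad y_{i,-}\mapsto-\alpha^{(i)}q,\quad y_{i,+}\mapsto\alpha^{(i)}p,\quad z_{i,j}\mapsto\alpha^{(i)}\alpha^{(j)}$$ extends to a Poisson algebra homomorphism $D_n:S\mathfrak{g}_n\to C^\infty(\mathbb{R}^2)$ (one degree of freedom canonical symplectic realisation). Moreover, for $N\ge1$ and vectors $\boldsymbol\alpha^{(1)},\dots,\boldsymbol\alpha^{(n-2)}\in\mathbb{R}^N$, the assignment $$h\mapsto\mathbf q\cdot\mathbf p,\quad x_-\mapsto-\mathbf q^2/2,\quad x_+\mapsto\mathbf p^2/2,\quad y_{i,-}\mapsto-\boldsymbol\alpha^{(i)}\cdot\mathbf q,\quad y_{i,+}\mapsto\boldsymbol\alpha^{(i)}\cdot\mathbf p,\quad z_{i,j}\mapsto\boldsymbol\alpha^{(i)}\cdot\boldsymbol\alpha^{(j)}$$ extends to a Poisson algebra homomorphism $S\mathfrak{g}_n\to C^\infty(\mathbb{R}^{2N})$ (the $N$ degrees of freedom canonical realisation obtained as $D_n^{\otimes N}$ composed with the $N$-th primitive coproduct, the $i$-th site using the constants given by the $i$-th components of the $\boldsymbol\alpha^{(j)}$).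
   Context: For $n\ge2$, $\mathfrak{g}_n$ is the real Lie algebra with basis $h,x_-,x_+$, $y_{i,\pm}$ ($1\le i\le n-2$), $z_{i,j}$ ($1\le i\le j\le n-2$), whose nonzero brackets (up to antisymmetry) are $[x_+,x_-]=h$, $[h,x_\pm]=\pm2x_\pm$, $[h,y_{i,\pm}]=\pm y_{i,\pm}$, $[x_-,y_{i,+}]=y_{i,-}$, $[x_+,y_{i,-}]=y_{i,+}$, $[y_{i,+},y_{j,-}]=z_{\min(i,j),\max(i,j)}$; all other brackets vanish. $S\mathfrak{g}_n$ is the polynomial algebra in the basis elements with the Lie–Poisson bracket $\{f,g\}=\sum_{i,j,k}c_{ij}^kx_k\,\partial_{x_i}f\,\partial_{x_j}g$ extending the Lie bracket. $C^\infty(\mathbb{R}^{2N})$ with Darboux coordinates $\mathbf q=(q_1,\dots,q_N)$, $\mathbf p=(p_1,\dots,p_N)$ carries the canonical bracket $\{f,g\}=\sum_k(\partial_{q_k}f\,\partial_{p_k}g-\partial_{q_k}g\,\partial_{p_k}f)$; for $N=1$ write $(q,p)$. The primitive coproduct is $\Delta(x)=x\otimes1+1\otimes x$ on generators. *)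

(* Defs.v *)
From HB Require Import structures.
From mathcomp Require Import all_boot all_order all_algebra.
From mathcomp Require Import all_classical all_reals all_analysis.
From mathcomp Require mpoly.
Import (canonicals, coercions) mpoly.

Set Implicit Arguments.
Unset Strict Implicit.
Unset Printing Implicit Defensive.

Import Order.TTheory GRing.Theory Num.Theory.
Local Open Scope ring_scope.

(* The basis of g_n, with m = n - 2:  h, x_-, x_+, y_{i,-}, y_{i,+}          *)
(* (i < m, i.e. 1 <= i+1 <= n-2) and z_{i,j} for i <= j.                      *)

Definition zidx (m : nat) := {ij : 'I_m * 'I_m | (ij.1 <= ij.2)%N}.

Inductive gen (m : nat) : Type :=
  | GH | GXm | GXp
  | GYm of 'I_m
  | GYp of 'I_m
  | GZ of zidx m.

Arguments GH {m}. Arguments GXm {m}. Arguments GXp {m}.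

Section GenFin.
Variable m : nat.
Definition gen_enc (g : gen m) :
  (unit + unit + unit + 'I_m + 'I_m + zidx m)%type :=
  match g with
  | GH => inl (inl (inl (inl (inl tt))))
  | GXm => inl (inl (inl (inl (inr tt))))
  | GXp => inl (inl (inl (inr tt)))
  | GYm i => inl (inl (inr i))
  | GYp i => inl (inr i)
  | GZ z => inr z
  end.
Definition gen_dec (s : (unit + unit + unit + 'I_m + 'I_m + zidx m)%type) : gen m :=
  match s with
  | inl (inl (inl (inl (inl _)))) => GH
  | inl (inl (inl (inl (inr _)))) => GXm
  | inl (inl (inl (inr _))) => GXp
  | inl (inl (inr i)) => GYm i
  | inl (inr i) => GYp i
  | inr z => GZ z
  end.
Lemma gen_encK : cancel gen_enc gen_dec. Proof. by case. Qed.
HB.instance Definition _ := Countable.copy (gen m) (can_type gen_encK).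
HB.instance Definition _ := Finite.copy (gen m) (can_type gen_encK).
End GenFin.

Lemma zmk_proof m (i j : 'I_m) :
  ((if (i <= j)%N then (i, j) else (j, i)).1 <= (if (i <= j)%N then (i, j) else (j, i)).2)%N.
Proof. by case: (ssrnat.leqP i j) => [//|/ltnW]. Qed.
Definition zmk m (i j : 'I_m) : zidx m :=
  exist _ (if (i <= j)%N then (i, j) else (j, i)) (zmk_proof i j).

(* S g_n : polynomial algebra over R in the basis elements of g_n.          *)
Section Sym.
Variables (R : realType) (m : nat).

Definition Sg := mpoly.mpoly #|{: gen m}| R.

Definition gX (g : gen m) : Sg := mpoly.mpolyX R (mpoly.mnm1 (enum_rank g)).

Definition gD (g : gen m) (f : Sg) : Sg := mpoly.mderiv (enum_rank g) f.

Definition lie_br (a b : gen m) : Sg :=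
  match a, b with
  | GXp, GXm => gX GH
  | GXm, GXp => - gX GH
  | GH, GXp => gX GXp *+ 2
  | GXp, GH => - (gX GXp *+ 2)
  | GH, GXm => - (gX GXm *+ 2)
  | GXm, GH => gX GXm *+ 2
  | GH, GYp i => gX (GYp i)
  | GYp i, GH => - gX (GYp i)
  | GH, GYm i => - gX (GYm i)
  | GYm i, GH => gX (GYm i)
  | GXm, GYp i => gX (GYm i)
  | GYp i, GXm => - gX (GYm i)
  | GXp, GYm i => gX (GYp i)
  | GYm i, GXp => - gX (GYp i)
  | GYp i, GYm j => gX (GZ (zmk i j))
  | GYm j, GYp i => - gX (GZ (zmk i j))
  | _, _ => 0
  end.

Definition lie_poisson (f g : Sg) : Sg :=
  \sum_(a : gen m) \sum_(b : gen m) lie_br a b * gD a f * gD b g.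

End Sym.

Section Smooth.
Variables (R : realType) (V : normedModType R).

Fixpoint iter_derive (vs : seq V) (f : V -> R) : V -> R :=
  match vs with
  | [::] => f
  | v :: vs' => fun x => derive (iter_derive vs' f) x v
  end.

Definition smooth (f : V -> R) : Prop :=
  forall (vs : seq V) (x : V), differentiable (iter_derive vs f) x.

Definition poisson_hom (m : nat) (br : (V -> R) -> (V -> R) -> (V -> R))
  (phi : Sg R m -> (V -> R)) : Prop :=
  [/\ forall p, smooth (phi p),
      forall (a : R) (p q : Sg R m), phi (a *: p + q) = (fun x => a * phi p x + phi q x),
      forall p q : Sg R m, phi (p * q) = (fun x => phi p x * phi q x),
      phi 1 = (fun _ => 1)
    & forall p q : Sg R m, phi (lie_poisson p q) = br (phi p) (phi q)].
End Smooth.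

(* canonical bracket on C^infinity(R^2), coordinates x = (q, p) *)
Definition can_br1 (R : realType) (f g : R * R -> R) : R * R -> R :=
  fun x => derive f x (1, 0) * derive g x (0, 1) - derive g x (1, 0) * derive f x (0, 1).

(* canonical bracket on C^infinity(R^{2N}), coordinates x = (q, p) with
   q, p in R^N (row vectors) *)
Definition can_brN (R : realType) (N : nat) (f g : 'rV[R]_N * 'rV[R]_N -> R)
  : 'rV[R]_N * 'rV[R]_N -> R :=
  fun x => \sum_(k < N)
    (derive f x (delta_mx 0 k, 0) * derive g x (0, delta_mx 0 k)
     - derive g x (delta_mx 0 k, 0) * derive f x (0, delta_mx 0 k)).

Definition dotv (R : realType) (N : nat) (u v : 'rV[R]_N) : R :=
  \sum_(k < N) u 0 k * v 0 k.

(* Main.v *)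
Require Import Defs.
From HB Require Import structures.
From mathcomp Require Import all_boot all_order all_algebra.
From mathcomp Require Import all_classical all_reals all_analysis.
From mathcomp Require mpoly.
Import (canonicals, coercions) mpoly.
Import Order.TTheory GRing.Theory Num.Theory.
Local Open Scope ring_scope.

Import numFieldNormedType.Exports.
From mathcomp Require Import ring lra.
Set Implicit Arguments.
Unset Strict Implicit.
Section PF.
Variables (R : realType) (V : normedModType R).

Lemma lin_diff {f : V -> R} : linear f -> continuous f ->
  forall x, differentiable f x /\ forall w, derive f x w = f w.
Proof.
move=> fl fc x.
pose flM := GRing.isLinear.Build _ _ _ _ _ fl.
pose fL : {linear V -> R} := HB.pack f flM.
have -> : f = fL by [].
split; first exact: linear_differentiable.
move=> w; rewrite deriveE; last exact: linear_differentiable.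
by rewrite diff_lin.
Qed.

Inductive pf : (V -> R) -> Prop :=
| pf_cst c : pf (fun _ => c)
| pf_lin f : linear f -> continuous f -> pf f
| pf_add f g : pf f -> pf g -> pf (fun x => f x + g x)
| pf_mul f g : pf f -> pf g -> pf (fun x => f x * g x).

Lemma pf_diff f : pf f -> forall x, differentiable f x.
Proof.
elim => [c|{}f fl fc|{}f g _ Hf _ Hg|{}f g _ Hf _ Hg] x.
- exact: differentiable_cst.
- by case: (lin_diff (f:=f) fl fc x).
- exact: (differentiableD (Hf x) (Hg x)).
- exact: (differentiableM (Hf x) (Hg x)).
Qed.

Lemma derD (f g : V -> R) (x w : V) : differentiable f x -> differentiable g x ->
  derive (fun y => f y + g y) x w = derive f x w + derive g x w.
Proof.
move=> df dg; have := deriveD (diff_derivable (v:=w) df) (diff_derivable (v:=w) dg).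
by [].
Qed.

Lemma derM (f g : V -> R) (x w : V) : differentiable f x -> differentiable g x ->
  derive (fun y => f y * g y) x w = f x * derive g x w + g x * derive f x w.
Proof.
move=> df dg; have := deriveM (diff_derivable (v:=w) df) (diff_derivable (v:=w) dg).
by [].
Qed.

Lemma derC (c : R) (x w : V) : derive (cst c) x w = 0.
Proof. exact: (derive_cst c x w). Qed.

Lemma pf_der f : pf f -> forall w, pf (fun x => derive f x w).
Proof.
elim => [c|{}f fl fc|{}f g pff Hf pfg Hg|{}f g pff Hf pfg Hg] w.
- have -> : (fun x => derive (cst c) x w) = fun _ => 0.
    by apply: funext => x; rewrite derC.
  exact: pf_cst.
- have -> : (fun x => derive f x w) = fun _ => f w.
    by apply: funext => x; case: (lin_diff (f:=f) fl fc x) => _ ->.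
  exact: pf_cst.
- have -> : (fun x => derive (fun y => f y + g y) x w) =
            fun x => derive f x w + derive g x w.
    by apply: funext => x; rewrite derD //; apply: pf_diff.
  exact: pf_add.
- have -> : (fun x => derive (fun y => f y * g y) x w) =
            fun x => f x * derive g x w + g x * derive f x w.
    by apply: funext => x; rewrite derM //; apply: pf_diff.
  by apply: pf_add; apply: pf_mul.
Qed.

Lemma pf_iter f : pf f -> forall vs, pf (iter_derive vs f).
Proof. by move=> pff; elim => [|w vs IH] //=; apply: pf_der. Qed.

Lemma pf_smooth f : pf f -> smooth f.
Proof. by move=> pff vs x; apply: pf_diff; apply: pf_iter. Qed.

Lemma pf_seqprod (I : Type) (s : seq I) (F : I -> V -> R) :
  (forall i, pf (F i)) -> pf (fun x => \prod_(i <- s) F i x).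
Proof.
move=> H; elim: s => [|i s IH].
  have -> : (fun x => \prod_(i <- [::]) F i x) = fun _ => 1 by apply: funext => x; rewrite big_nil.
  exact: pf_cst.
have -> : (fun x => \prod_(j <- i :: s) F j x) = fun x => F i x * \prod_(j <- s) F j x.
  by apply: funext => x; rewrite big_cons.
exact: pf_mul.
Qed.

Lemma pf_seqsum (I : Type) (s : seq I) (F : I -> V -> R) :
  (forall i, pf (F i)) -> pf (fun x => \sum_(i <- s) F i x).
Proof.
move=> H; elim: s => [|i s IH].
  have -> : (fun x => \sum_(i <- [::]) F i x) = fun _ => 0 by apply: funext => x; rewrite big_nil.
  exact: pf_cst.
have -> : (fun x => \sum_(j <- i :: s) F j x) = fun x => F i x + \sum_(j <- s) F j x.
  by apply: funext => x; rewrite big_cons.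
exact: pf_add.
Qed.

Lemma derSum (I : Type) (s : seq I) (F : I -> V -> R) x w :
  (forall i, pf (F i)) ->
  derive (fun y => \sum_(i <- s) F i y) x w = \sum_(i <- s) derive (F i) x w.
Proof.
move=> H; elim: s => [|i s IH].
  have -> : (fun y => \sum_(i <- [::]) F i y) = cst 0 by apply: funext => y; rewrite big_nil.
  by rewrite derC big_nil.
have -> : (fun y => \sum_(j <- i :: s) F j y) = fun y => F i y + \sum_(j <- s) F j y.
  by apply: funext => y; rewrite big_cons.
rewrite derD ?big_cons ?IH //; apply: pf_diff => //; exact: pf_seqsum.
Qed.

Lemma pf_exp f k : pf f -> pf (fun x => f x ^+ k).
Proof.
move=> H; elim: k => [|k IH].
  have -> : (fun x => f x ^+ 0) = fun _ => 1 by apply: funext => x; rewrite expr0.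
  exact: pf_cst.
have -> : (fun x => f x ^+ k.+1) = fun x => f x * f x ^+ k.
  by apply: funext => x; rewrite exprS.
exact: pf_mul.
Qed.

Section Poly.
Variables (n : nat) (e : 'I_n -> V -> R).
Hypothesis pfe : forall i, pf (e i).

Definition ev (P : mpoly.mpoly n R) : V -> R := fun x => mpoly.meval (fun i => e i x) P.

Lemma pf_ev P : pf (ev P).
Proof.
elim/mpoly.mpolyind: P => [|c m p _ _ IH].
  have -> : ev 0 = fun _ => 0 by apply: funext => x; rewrite /ev mpoly.meval0.
  exact: pf_cst.
have -> : ev (c *: mpoly.mpolyX R m + p) =
   fun x => c * (\prod_(i < n) e i x ^+ m i) + ev p x.
  by apply: funext => x; rewrite /ev mpoly.mevalD mpoly.mevalZ mpoly.mevalX.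
apply: pf_add => //; apply: pf_mul; first exact: pf_cst.
by apply: pf_seqprod => i; apply: pf_exp.
Qed.

Lemma derMc (c : R) (f : V -> R) x w : differentiable f x ->
  derive (fun y => c * f y) x w = c * derive f x w.
Proof.
move=> df; have := @derM (fun _ => c) f x w (differentiable_cst c x) df.
by rewrite /= => ->; rewrite derC mulr0 addr0.
Qed.

Definition chainQ P := forall x w,
  derive (ev P) x w = \sum_(i < n) ev (mpoly.mderiv i P) x * derive (e i) x w.

Lemma ev0 : ev 0 = fun _ => 0.
Proof. by apply: funext => x; rewrite /ev mpoly.meval0. Qed.

Lemma evD P P' : ev (P + P') = fun x => ev P x + ev P' x.
Proof. by apply: funext => x; rewrite /ev mpoly.mevalD. Qed.

Lemma evM P P' : ev (P * P') = fun x => ev P x * ev P' x.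
Proof. by apply: funext => x; rewrite /ev mpoly.mevalM. Qed.

Lemma evZ c P : ev (c *: P) = fun x => c * ev P x.
Proof. by apply: funext => x; rewrite /ev mpoly.mevalZ. Qed.

Lemma ev1 : ev 1 = fun _ => 1.
Proof. by apply: funext => x; rewrite /ev mpoly.meval1. Qed.

Lemma chain0 : chainQ 0.
Proof.
move=> x w; rewrite ev0 (derC 0) big1 // => i _.
by rewrite raddf0 ev0 mul0r.
Qed.

Lemma chain1 : chainQ 1.
Proof.
move=> x w; rewrite ev1 (derC 1) big1 // => i _.
by rewrite -mpoly.mpolyC1 mpoly.mderivC ev0 mul0r.
Qed.

Lemma chainD P P' : chainQ P -> chainQ P' -> chainQ (P + P').
Proof.
move=> H H' x w; rewrite evD derD ?H ?H'; try exact: pf_diff (pf_ev _) x.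
rewrite -big_split /=; apply: eq_bigr => i _.
by rewrite mpoly.mderivD evD mulrDl.
Qed.

Lemma chainZ c P : chainQ P -> chainQ (c *: P).
Proof.
move=> H x w; rewrite evZ derMc ?H; last exact: pf_diff (pf_ev _) x.
rewrite mulr_sumr; apply: eq_bigr => i _.
by rewrite mpoly.mderivZ evZ mulrA.
Qed.

Lemma chainM P P' : chainQ P -> chainQ P' -> chainQ (P * P').
Proof.
move=> H H' x w; rewrite evM derM ?H ?H'; try exact: pf_diff (pf_ev _) x.
rewrite !mulr_sumr -big_split /=; apply: eq_bigr => i _.
rewrite mpoly.mderivM evD !evM /=; ring.
Qed.

Lemma chainX j : chainQ (mpoly.mpolyX R (mpoly.mnm1 j)).
Proof.
move=> x w.
have -> : ev (mpoly.mpolyX R (mpoly.mnm1 j)) = e j.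
  by apply: funext => y; rewrite /ev mpoly.mevalXU.
rewrite (bigD1 j) //= big1 ?addr0.
  rewrite mpoly.mderivX mpoly.mnm1E eqxx /=.
  rewrite [mpoly.mpolyX _ _](_ : _ = 1); last first.
    rewrite -mpoly.mpolyX0; congr mpoly.mpolyX.
    by apply/mpoly.mnmP => k; rewrite mpoly.mnmBE mpoly.mnm0E subnn.
  by rewrite scale1r ev1 mul1r.
move=> i /negbTE nij; rewrite mpoly.mderivX mpoly.mnm1E eq_sym nij /=.
by rewrite scale0r ev0 mul0r.
Qed.

Lemma chain_all P : chainQ P.
Proof.
elim/mpoly.mpolyind: P => [|c m p _ _ IH]; first exact: chain0.
apply: chainD => //; apply: chainZ.
rewrite mpoly.mpolyXE_id.
apply: (big_ind chainQ) => //; first exact: chain1.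
  by move=> ? ?; apply: chainM.
move=> i _; elim: (m i) => [|k IHk]; first by rewrite expr0; apply: chain1.
by rewrite exprS; apply: chainM => //; apply: chainX.
Qed.

End Poly.

Lemma ev_big (n : nat) (e : 'I_n -> V -> R) (I : Type) (s : seq I) F x :
  ev e (\sum_(i <- s) F i) x = \sum_(i <- s) ev e (F i) x.
Proof.
elim: s => [|i s IH]; first by rewrite !big_nil ev0.
by rewrite !big_cons evD IH.
Qed.

Section Generic.
Variables (m : nat) (K : nat) (u w : 'I_K -> V) (v : gen m -> V -> R).
Hypothesis pfv : forall a, pf (v a).

Definition brK (f g : V -> R) : V -> R := fun x => \sum_(k < K)
  (derive f x (u k) * derive g x (w k) - derive g x (u k) * derive f x (w k)).

Definition ee : 'I_#|{: gen m}| -> V -> R := fun i => v (enum_val i).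

Definition phi (P : Sg R m) : V -> R := ev ee P.

Lemma pfee i : pf (ee i). Proof. exact: pfv. Qed.

Lemma phiX a : phi (gX R a) = v a.
Proof.
by apply: funext => x; rewrite /phi /ev /gX mpoly.mevalXU /ee enum_rankK.
Qed.

Lemma chain_gen P x d :
  derive (phi P) x d = \sum_(a : gen m) phi (gD a P) x * derive (v a) x d.
Proof.
rewrite /phi (chain_all pfee) (reindex (@enum_rank _)) /=; last first.
  by apply: onW_bij; apply: enum_rank_bij.
by apply: eq_bigr => a _; rewrite /ee enum_rankK.
Qed.

Hypothesis table : forall a b x, brK (v a) (v b) x = phi (lie_br R a b) x.

Theorem generic_hom : poisson_hom brK phi.
Proof.
split.
- by move=> p; apply: pf_smooth; apply: pf_ev; apply: pfee.
- by move=> a p q; rewrite /phi evD evZ.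
- by move=> p q; rewrite /phi evM.
- by rewrite /phi ev1.
move=> p q; apply: funext => x.
have E : forall a b, ev ee (lie_br R a b * gD a p * gD b q) x =
  \sum_(k < K) (ev ee (gD a p) x * ev ee (gD b q) x *
     (derive (v a) x (u k) * derive (v b) x (w k) -
      derive (v b) x (u k) * derive (v a) x (w k))).
  move=> a b; rewrite !evM -/(phi _) -table /brK -mulrA mulr_suml.
  by apply: eq_bigr => k _; ring.
rewrite /lie_poisson /phi ev_big.
under eq_bigr do rewrite ev_big.
under eq_bigr do under eq_bigr do rewrite E.
rewrite /brK.
under [RHS]eq_bigr do rewrite !chain_gen.
under eq_bigr do rewrite exchange_big /=.
rewrite exchange_big /=; apply: eq_bigr => k _.
rewrite !big_distrlr /= [X in _ - X]exchange_big /= -sumrB.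
apply: eq_bigr => a _; rewrite -sumrB; apply: eq_bigr => b _.
rewrite /phi; ring.
Qed.

End Generic.
End PF.

Section Aux.
Variables (R : realType) (V : normedModType R).
Lemma pf_ext (f g : V -> R) : pf f -> f = g -> pf g.
Proof. by move=> H <-. Qed.
Lemma derL (f : V -> R) x d : linear f -> continuous f -> derive f x d = f d.
Proof. by move=> fl fc; case: (lin_diff fl fc x) => _ ->. Qed.
Lemma pfN f : pf f -> pf (fun x : V => - f x).
Proof.
move=> H; apply: (@pf_ext (fun x => (fun _ => -1) x * f x)); first by apply: pf_mul => //; apply: pf_cst.
by apply: funext => x /=; rewrite mulN1r.
Qed.
Lemma derN' (f : V -> R) x d : pf f -> derive (fun y => - f y) x d = - derive f x d.
Proof.
move=> H; have -> : (fun y => - f y) = (fun y => -1 * f y) by apply: funext => y; rewrite mulN1r.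
by rewrite derMc ?mulN1r //; apply: pf_diff.
Qed.
Lemma pfMc c f : pf f -> pf (fun x : V => c * f x).
Proof. by move=> H; apply: (@pf_mul _ _ (fun _ => c)) => //; apply: pf_cst. Qed.
End Aux.


Section PhiLemmas.
Variables (R : realType) (V : normedModType R) (m : nat) (v : gen m -> V -> R).
Lemma phiN P x : phi v (- P) x = - phi v P x.
Proof. by rewrite /phi /ev mpoly.mevalN. Qed.
Lemma phiMn P k x : phi v (P *+ k) x = phi v P x *+ k.
Proof. by rewrite /phi /ev mpoly.mevalMn. Qed.
Lemma phi0 x : phi v 0 x = 0.
Proof. by rewrite /phi /ev mpoly.meval0. Qed.
Lemma phiXx a x : phi v (gX R a) x = v a x.
Proof. by rewrite phiX. Qed.
End PhiLemmas.

Section One.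
Variables (R : realType) (m : nat) (alpha : 'I_m -> R).

Definition v1 (g : gen m) : (R * R)%type -> R := fun x : R * R =>
            let q := x.1 in let p := x.2 in
            match g with
            | GH => q * p
            | GXm => - (q ^+ 2 / 2)
            | GXp => p ^+ 2 / 2
            | GYm i => - (alpha i * q)
            | GYp i => alpha i * p
            | GZ z => alpha (sval z).1 * alpha (sval z).2
            end.

Definition D1 (g : gen m) (x d : (R * R)%type) : R :=
  match g with
  | GH => x.1 * d.2 + x.2 * d.1
  | GXm => - (x.1 * d.1)
  | GXp => x.2 * d.2
  | GYm i => - (alpha i * d.1)
  | GYp i => alpha i * d.2
  | GZ _ => 0
  end.

Let Q := fun x : (R * R)%type => x.1.
Let P := fun x : (R * R)%type => x.2.
Lemma pfQ : pf Q.
Proof. by apply: pf_lin => // x; exact: cvg_fst. Qed.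
Lemma pfP : pf P.
Proof. by apply: pf_lin => // x; exact: cvg_snd. Qed.
Lemma dQ x d : derive Q x d = d.1.
Proof. by rewrite derL // => y; exact: cvg_fst. Qed.
Lemma dP x d : derive P x d = d.2.
Proof. by rewrite derL // => y; exact: cvg_snd. Qed.

Lemma v1_eq g : v1 g = match g with
            | GH => fun x => Q x * P x
            | GXm => fun x => (-2^-1) * (Q x * Q x)
            | GXp => fun x => 2^-1 * (P x * P x)
            | GYm i => fun x => (- alpha i) * Q x
            | GYp i => fun x => alpha i * P x
            | GZ z => fun _ => alpha (sval z).1 * alpha (sval z).2
            end.
Proof.
by case: g => [|||i|i|z]; apply: funext => x; rewrite /v1 /Q /P //=;
  rewrite ?expr2 ?mulNr // mulrC.
Qed.

Lemma pfv1 g : pf (v1 g).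
Proof.
rewrite v1_eq; case: g => [|||i|i|z]; try apply: pfMc;
  try apply: pf_mul; try apply: pf_cst; try apply: pfQ; try apply: pfP.
Qed.

Lemma dv1 g x d : derive (v1 g) x d = D1 g x d.
Proof.
have dfQ := pf_diff pfQ; have dfP := pf_diff pfP.
rewrite v1_eq; case: g => [|||i|i|z] /=.
- by rewrite derM // dQ dP.
- rewrite derMc ?derM ?dQ //; last exact: differentiableM.
  by rewrite /Q; field.
- rewrite derMc ?derM ?dP //; last exact: differentiableM.
  by rewrite /P; field.
- by rewrite derMc // dQ mulNr.
- by rewrite derMc // dP.
- exact: (derC (alpha (sval z).1 * alpha (sval z).2)).
Qed.


Definition u1 : 'I_1 -> (R * R)%type := fun _ => (1, 0).
Definition w1 : 'I_1 -> (R * R)%type := fun _ => (0, 1).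

Lemma table1 a b x : brK u1 w1 (v1 a) (v1 b) x = phi v1 (lie_br R a b) x.
Proof.
rewrite /brK big_ord1 !dv1 /u1 /w1.
case: a => [|||i|i|z]; case: b => [|||j|j|z'];
  rewrite /= ?phiN ?phiMn ?phiXx ?phi0 /v1 /D1 /=; try (by field); try (by ring).
all: case: ifP => _ /=; ring.
Qed.

Lemma part1 : exists ph : Sg R m -> ((R * R)%type -> R),
       poisson_hom (@can_br1 R) ph /\
       forall g : gen m, ph (gX R g) = v1 g.
Proof.
exists (phi v1); split; last by move=> g; rewrite phiX.
have -> : @can_br1 R = brK u1 w1.
  by apply: funext => f; apply: funext => g; apply: funext => x; rewrite /brK big_ord1.
apply: generic_hom; [exact: pfv1 | exact: table1].
Qed.
End One.

Section Many.
Variables (R : realType) (N : nat) (m : nat) (alpha : 'I_m -> 'rV[R]_N).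
Local Notation VV := ('rV[R]_N * 'rV[R]_N)%type.

Definition vN (g : gen m) : VV -> R := fun x : VV =>
            let q := x.1 in let p := x.2 in
            match g with
            | GH => dotv q p
            | GXm => - (dotv q q / 2)
            | GXp => dotv p p / 2
            | GYm i => - dotv (alpha i) q
            | GYp i => dotv (alpha i) p
            | GZ z => dotv (alpha (sval z).1) (alpha (sval z).2)
            end.

Definition DN (g : gen m) (x d : VV) : R :=
  match g with
  | GH => dotv x.1 d.2 + dotv x.2 d.1
  | GXm => - dotv x.1 d.1
  | GXp => dotv x.2 d.2
  | GYm i => - dotv (alpha i) d.1
  | GYp i => dotv (alpha i) d.2
  | GZ _ => 0
  end.

Let Q k := fun x : VV => x.1 0 k.
Let P k := fun x : VV => x.2 0 k.
Lemma pfQN k : pf (Q k).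
Proof.
apply: pf_lin; first by move=> a x y; rewrite /Q /= !mxE.
move=> x; apply: (@continuous_comp _ _ _ fst (fun M : 'rV[R]_N => M 0 k)).
  exact: cvg_fst. exact: coord_continuous.
Qed.
Lemma pfPN k : pf (P k).
Proof.
apply: pf_lin; first by move=> a x y; rewrite /P /= !mxE.
move=> x; apply: (@continuous_comp _ _ _ snd (fun M : 'rV[R]_N => M 0 k)).
  exact: cvg_snd. exact: coord_continuous.
Qed.
Lemma dQN k x d : derive (Q k) x d = d.1 0 k.
Proof.
rewrite derL //; first by move=> a y z; rewrite /Q /= !mxE.
move=> y; apply: (@continuous_comp _ _ _ fst (fun M : 'rV[R]_N => M 0 k)).
  exact: cvg_fst. exact: coord_continuous.
Qed.
Lemma dPN k x d : derive (P k) x d = d.2 0 k.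
Proof.
rewrite derL //; first by move=> a y z; rewrite /P /= !mxE.
move=> y; apply: (@continuous_comp _ _ _ snd (fun M : 'rV[R]_N => M 0 k)).
  exact: cvg_snd. exact: coord_continuous.
Qed.

Lemma vN_eq g : vN g = match g with
            | GH => fun x => \sum_(k < N) Q k x * P k x
            | GXm => fun x => (-2^-1) * \sum_(k < N) Q k x * Q k x
            | GXp => fun x => 2^-1 * \sum_(k < N) P k x * P k x
            | GYm i => fun x => (-1) * \sum_(k < N) alpha i 0 k * Q k x
            | GYp i => fun x => \sum_(k < N) alpha i 0 k * P k x
            | GZ z => fun _ => dotv (alpha (sval z).1) (alpha (sval z).2)
            end.
Proof.
case: g => [|||i|i|z]; apply: funext => x; rewrite /vN /Q /P /dotv //=.
- by rewrite mulNr mulrC.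
- by rewrite mulrC.
- by rewrite mulN1r.
Qed.

Lemma pfvN g : pf (vN g).
Proof.
rewrite vN_eq; case: g => [|||i|i|z]; try apply: pf_cst;
  try apply: pfMc; apply: pf_seqsum => k; try apply: pfMc;
  try apply: pf_mul; try apply: pfQN; try apply: pfPN.
Qed.

Lemma dvN g x d : derive (vN g) x d = DN g x d.
Proof.
have dfQ k := pf_diff (pfQN k); have dfP k := pf_diff (pfPN k).
have pQQ k : pf (fun y => Q k y * Q k y) by apply: pf_mul; apply: pfQN.
have pPP k : pf (fun y => P k y * P k y) by apply: pf_mul; apply: pfPN.
have pQP k : pf (fun y => Q k y * P k y) by apply: pf_mul; [apply: pfQN|apply: pfPN].
have paQ (i : 'I_m) k : pf (fun y => alpha i 0 k * Q k y) by apply: pfMc; apply: pfQN.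
have paP (i : 'I_m) k : pf (fun y => alpha i 0 k * P k y) by apply: pfMc; apply: pfPN.
rewrite vN_eq /DN /dotv; case: g => [|||i|i|z] /=.
- rewrite derSum // -big_split; apply: eq_bigr => k _.
  by rewrite derM // dQN dPN.
- rewrite derMc; last by apply: pf_diff; apply: pf_seqsum.
  rewrite derSum // mulr_sumr -sumrN; apply: eq_bigr => k _.
  by rewrite derM // dQN /Q; field.
- rewrite derMc; last by apply: pf_diff; apply: pf_seqsum.
  rewrite derSum // mulr_sumr; apply: eq_bigr => k _.
  by rewrite derM // dPN /P; field.
- rewrite derMc; last by apply: pf_diff; apply: pf_seqsum.
  rewrite derSum // mulN1r; congr (- _); apply: eq_bigr => k _.
  by rewrite derMc // dQN.
- rewrite derSum //; apply: eq_bigr => k _.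
  by rewrite derMc // dPN.
- exact: (derC (dotv (alpha (sval z).1) (alpha (sval z).2))).
Qed.


Lemma dotv0 (a : 'rV[R]_N) : dotv a 0 = 0.
Proof. by rewrite /dotv big1 // => k _; rewrite mxE mulr0. Qed.

Lemma dotvd (a : 'rV[R]_N) k : dotv a (delta_mx 0 k) = a 0 k.
Proof.
rewrite /dotv (bigD1 k) //= big1 ?addr0.
  by rewrite mxE !eqxx mulr1.
by move=> j /negbTE nj; rewrite mxE nj andbF mulr0.
Qed.

Definition uN : 'I_N -> VV := fun k => (delta_mx 0 k, 0).
Definition wN : 'I_N -> VV := fun k => (0, delta_mx 0 k).

Definition Du (g : gen m) (x : VV) k : R :=
  match g with
  | GH => x.2 0 k | GXm => - x.1 0 k | GXp => 0
  | GYm i => - alpha i 0 k | GYp _ => 0 | GZ _ => 0 end.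
Definition Dw (g : gen m) (x : VV) k : R :=
  match g with
  | GH => x.1 0 k | GXm => 0 | GXp => x.2 0 k
  | GYm _ => 0 | GYp i => alpha i 0 k | GZ _ => 0 end.

Lemma dvNu g x k : derive (vN g) x (uN k) = Du g x k.
Proof.
by rewrite dvN; case: g => [|||i|i|z]; rewrite /DN /Du /uN /= ?dotv0 ?dotvd ?add0r ?oppr0.
Qed.
Lemma dvNw g x k : derive (vN g) x (wN k) = Dw g x k.
Proof.
by rewrite dvN; case: g => [|||i|i|z]; rewrite /DN /Dw /wN /= ?dotv0 ?dotvd ?addr0 ?oppr0.
Qed.

Lemma tableN a b x : brK uN wN (vN a) (vN b) x = phi vN (lie_br R a b) x.
Proof.
rewrite /brK.
under eq_bigr do rewrite !dvNu !dvNw.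
case: a => [|||i|i|z]; case: b => [|||j|j|z'];
  rewrite /= ?phiN ?phiMn ?phiXx ?phi0 /vN /Du /Dw /dotv /=;
  try (by apply: big1 => k _; ring);
  rewrite ?mulr_suml -?sumrN -?sumrMnl -?sumrN; try (case: ifP => _ /=);
  apply: eq_bigr => k _; by field.
Qed.

Lemma part2 : exists ph : Sg R m -> (VV -> R),
       poisson_hom (@can_brN R N) ph /\
       forall g : gen m, ph (gX R g) = vN g.
Proof.
exists (phi vN); split; last by move=> g; rewrite phiX.
have -> : @can_brN R N = brK uN wN by [].
apply: generic_hom; [exact: pfvN | exact: tableN].
Qed.

End Many.

Unset Implicit Arguments.
Set Strict Implicit.

Theorem proposition5p1 (R : realType) (n : nat) (hn : (2 <= n)%N) :
  (forall alpha : 'I_(n - 2) -> R,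
     exists phi : Sg R (n - 2) -> (R * R -> R),
       poisson_hom (@can_br1 R) phi /\
       forall g : gen (n - 2),
         phi (gX R g) =
         (fun x : R * R =>
            let q := x.1 in let p := x.2 in
            match g with
            | GH => q * p
            | GXm => - (q ^+ 2 / 2)
            | GXp => p ^+ 2 / 2
            | GYm i => - (alpha i * q)
            | GYp i => alpha i * p
            | GZ z => alpha (sval z).1 * alpha (sval z).2
            end))
  /\
  (forall (N : nat), (1 <= N)%N ->
   forall alpha : 'I_(n - 2) -> 'rV[R]_N,
     exists phi : Sg R (n - 2) -> ('rV[R]_N * 'rV[R]_N -> R),
       poisson_hom (@can_brN R N) phi /\
       forall g : gen (n - 2),
         phi (gX R g) =
         (fun x : 'rV[R]_N * 'rV[R]_N =>
            let q := x.1 in let p := x.2 in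
            match g with
            | GH => dotv q p
            | GXm => - (dotv q q / 2)
            | GXp => dotv p p / 2
            | GYm i => - dotv (alpha i) q
            | GYp i => dotv (alpha i) p
            | GZ z => dotv (alpha (sval z).1) (alpha (sval z).2)
            end)).
Proof.
split.
- move=> alpha; have [ph [H1 H2]] := part1 alpha.
  by exists ph; split => // g; rewrite H2.
- move=> N _ alpha; have [ph [H1 H2]] := part2 alpha.
  by exists ph; split => // g; rewrite H2.
Qed.
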